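(* Let $G$ be a finite group and $H \le G$ a subgroup. For $h\in H$ write $(h)_H$, $(h)_G$ for the conjugacy classes of $h$ in $H$ and in $G$, and $(h)_H^{\pm}=(h)_H\cup(h^{-1})_H$, $(h)_G^{\pm}=(h)_G\cup(h^{-1})_G$. Then: (1) The induction homomorphism $\operatorname{Ind}_H^G:\operatorname{R}(H)\to\operatorname{R}(G)$ is a monomorphism if and only if $(h)_G\cap H=(h)_H$ for every $h\in H$. (2) The induction homomorphism $\operatorname{Ind}_H^G:\operatorname{RO}(H)\to\operatorname{RO}(G)$ is a monomorphism if and only if $(h)_G^{\pm}\cap H=(h)_H^{\pm}$ for every $h\in H$.
   Context: All groups are finite. $\operatorname{R}(K)$ denotes the complex representation group of $K$ (Grothendieck group of finite-dimensional $\mathbb{C}K$-modules under direct sum) and $\operatorname{RO}(K)$ the real representation group (same for $\mathbb{R}K$-modules), regarded as a subgroup of $\operatorname{R}(K)$ via complexification; $\operatorname{Ind}_H^G$ is induction of representations. The set $(g)^{\pm}=(g)\cup(g^{-1})$ is called the real conjugacy class of $g$. *)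

(* Defs.v *)
From HB Require Import structures.
From mathcomp Require Import all_boot all_order all_algebra all_fingroup all_solvable all_field all_character vcharacter mxrepresentation.
Set Implicit Arguments. Unset Strict Implicit. Unset Printing Implicit Defensive.
Import GRing.Theory Num.Theory.
Local Open Scope ring_scope.

(* R(K): the Grothendieck group of complex representations, identified with
   the group of virtual characters Z[irr K] inside 'CF(K). *)
Definition Rgrp (gT : finGroupType) (K : {group gT}) : pred 'CF(K) :=
  fun phi => phi \in ('Z[irr K])%g.

(* Characters of real representations: characters afforded by a matrix
   representation all of whose matrices have real entries (i.e. entries in
   the real closed field of real algebraic numbers, algC :&: R). *)
Definition real_repr_char (gT : finGroupType) (K : {group gT}) (chi : 'CF(K)) : Prop :=
  exists n (rK : mx_representation algC K n),
    (forall x, x \in K -> forall i j, rK x i j \is Num.real) /\ chi = cfRepr rK.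

(* RO(K): the real representation group, as a subgroup of R(K) via
   complexification: differences of characters of real representations. *)
Definition ROgrp (gT : finGroupType) (K : {group gT}) (phi : 'CF(K)) : Prop :=
  exists chi1 chi2, [/\ real_repr_char chi1, real_repr_char chi2 & phi = chi1 - chi2].

(* Main.v *)
Require Import Defs.
From HB Require Import structures.
From mathcomp Require Import all_boot all_order all_algebra all_fingroup all_solvable all_field all_character vcharacter mxrepresentation.
From mathcomp Require Import ring.
Set Implicit Arguments. Unset Strict Implicit. Unset Printing Implicit Defensive.
Import Order.TTheory GRing.Theory Num.Theory.
Local Open Scope ring_scope.

Section PartA.
Variables (gT : finGroupType) (G H : {group gT}).
Hypothesis sHG : H \subset G.

Lemma IndE_const (phi : 'CF(H)) h :
  (forall x, x \in G -> (h ^ x)%g \in H -> phi (h ^ x)%g = phi h) ->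
  'Ind[G, H] phi h = (#|H|%:R^-1 * \sum_(x in G) ((h ^ x)%g \in H)%:R) * phi h.
Proof.
move=> Hc; rewrite cfIndE // -mulrA mulr_suml; congr (_ * _); apply: eq_bigr => x Gx.
case: (boolP ((h ^ x)%g \in H)) => hxH; first by rewrite Hc // mul1r.
by rewrite cfun0 // mul0r.
Qed.

Lemma cnt_neq0 h : h \in H ->
  (#|H|%:R^-1 * \sum_(x in G) ((h ^ x)%g \in H)%:R : algC) != 0.
Proof.
move=> hH; rewrite mulf_neq0 ?invr_eq0 ?pnatr_eq0 -?lt0n ?cardG_gt0 //.
rewrite (bigD1 1%g) //= conjg1 hH; apply: lt0r_neq0.
by apply: ltr_wpDr; [apply: sumr_ge0 => i _; apply: ler0n | apply: ltr01].
Qed.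

Lemma Ind_inj_of (P : 'CF(H) -> Prop) :
  (forall phi, P phi -> forall h, h \in H -> forall x, x \in G ->
      (h ^ x)%g \in H -> phi (h ^ x)%g = phi h) ->
  forall phi psi, P phi -> P psi -> 'Ind[G, H] phi = 'Ind[G, H] psi -> phi = psi.
Proof.
move=> HP phi psi Pphi Ppsi E; apply/cfunP => y.
case: (boolP (y \in H)) => yH; last by rewrite !cfun0.
have := congr1 (fun f : 'CF(G) => f y) E.
rewrite !IndE_const; [| exact: HP Ppsi y yH | exact: HP Pphi y yH].
by move/(mulfI (@cnt_neq0 y yH)).
Qed.

Lemma Ind_supp (u : 'CF(H)) h : h \in G ->
  (forall x, x \in H -> u x != 0 -> x \in (h ^: G)%g) ->
  forall g, 'Ind[G, H] u g = 'Ind[G, H] u h * (g \in (h ^: G)%g)%:R.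
Proof.
move=> hG Hs g; case: (boolP (g \in (h ^: G)%g)) => gC.
  rewrite mulr1; case/imsetP: gC => z zG ->; exact: cfunJ.
rewrite mulr0 cfIndE // big1 ?mulr0 // => y yG.
apply/eqP; apply: contraR gC => nz.
have gyH : (g ^ y)%g \in H by apply: contraR nz => nH; rewrite cfun0.
have := Hs _ gyH nz; rewrite class_sym -(classGidl g yG) class_sym //.
Qed.

Lemma Ind_pos k : k \in H -> 0 < 'Ind[G, H] '1_(k ^: H)%g k.
Proof.
move=> kH; rewrite cfIndE // mulr_gt0 ?invr_gt0 ?ltr0n ?cardG_gt0 //.
rewrite (bigD1 1%g) //= conjg1 cfun_classE kH class_refl /=.
apply: ltr_wpDr; last exact: ltr01.
by apply: sumr_ge0 => i _; rewrite cfun_classE ler0n.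
Qed.

Lemma supp_class (h k : gT) x : k \in (h ^: G)%g -> x \in H ->
  ('1_(k ^: H)%g : 'CF(H)) x != 0 -> x \in (h ^: G)%g.
Proof.
move=> kh xH; rewrite cfun_classE; case: (boolP (x \in (k ^: H)%g)); last by move=> _; rewrite andbF eqxx.
move=> xk _; have xkG : x \in (k ^: G)%g by apply: (subsetP (classS k sHG)).
by rewrite (class_transl h xkG).
Qed.

Lemma kernel_elt h k : h \in H -> k \in H -> k \in (h ^: G)%g ->
  exists2 b : algC, 0 < b & exists a : algC,
    'Ind[G, H] (b *: '1_(h ^: H)%g - a *: '1_(k ^: H)%g) = 0.
Proof.
move=> hH kH khG; have hG : h \in G by apply: (subsetP sHG).
have Su := @Ind_supp '1_(h ^: H)%g h hG (@supp_class h h ^~ (class_refl G h)).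
have Sv := @Ind_supp '1_(k ^: H)%g h hG (@supp_class h k ^~ khG).
exists ('Ind[G, H] '1_(k ^: H)%g h).
  by have := Sv k; rewrite khG mulr1 => <-; apply: Ind_pos.
exists ('Ind[G, H] '1_(h ^: H)%g h); apply/cfunP => g.
rewrite linearB !linearZ /= !cfunE (Su g) (Sv g); ring.
Qed.

End PartA.

Lemma rat_kernel m p q (AQ : 'M[rat]_(m, p)) (BQ : 'M[rat]_(m, q)) (a : 'rV[algC]_m) :
  a *m map_mx ratr AQ != 0 -> a *m map_mx ratr BQ = 0 ->
  exists b : 'rV[rat]_m, b *m AQ != 0 /\ b *m BQ = 0.
Proof.
move=> nzA zB.
have KA : kermx BQ *m AQ != 0.
  apply: contraNneq nzA => KA0.
  have : (a <= kermx (map_mx ratr BQ))%MS by apply/sub_kermxP.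
  rewrite -map_kermx => /submxP [D ->].
  by rewrite -mulmxA -map_mxM KA0 map_mx0 mulmx0.
have [i Hi] : exists i, row i (kermx BQ) *m AQ != 0.
  apply/existsP; apply: contraR KA; rewrite negb_exists => /forallP Hall.
  apply/eqP/row_matrixP => i; rewrite row_mul row0; exact/eqP/negbNE/Hall.
exists (row i (kermx BQ)); split => //.
by rewrite -row_mul mulmx_ker row0.
Qed.

Lemma clear_den m (b : 'rV[rat]_m) :
  exists2 d : rat, d != 0 & exists c : 'I_m -> int, forall i, d * b 0 i = (c i)%:~R.
Proof.
exists (\prod_i denq (b 0 i))%:~R.
  by rewrite intr_eq0; apply/prodf_neq0 => i _; apply: denq_neq0.
exists (fun i => numq (b 0 i) * \prod_(j | j != i) denq (b 0 j)) => i.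
by rewrite (bigD1 i) //= !intrM numqE; ring.
Qed.

Section Coord.
Variables (gT : finGroupType) (K : {group gT}).

Definition coordmx n (phi : 'I_n -> 'CF(K)) : 'M[algC]_(n, Nirr K) :=
  \matrix_(i, j) '[phi i, 'chi_j].

Definition coordQ n (phi : 'I_n -> 'CF(K)) : 'M[rat]_(n, Nirr K) :=
  \matrix_(i, j) (Num.floor '[phi i, 'chi_j])%:~R.

Lemma coordQE n (phi : 'I_n -> 'CF(K)) : (forall i, phi i \in 'Z[irr K]%g) ->
  map_mx ratr (coordQ phi) = coordmx phi.
Proof.
by move=> Z; apply/matrixP => i j; rewrite !mxE ratr_int floorK // Cint_cfdot_vchar_irr.
Qed.

Lemma sum0P n (phi : 'I_n -> 'CF(K)) (w : 'rV[algC]_n) :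
  (\sum_i w 0 i *: phi i == 0) = (w *m coordmx phi == 0).
Proof.
have E j : '[\sum_i w 0 i *: phi i, 'chi_j] = (w *m coordmx phi) 0 j.
  by rewrite cfdot_suml mxE; apply: eq_bigr => i _; rewrite cfdotZl mxE.
apply/eqP/eqP => [S|M].
  by apply/rowP => j; rewrite -E S cfdot0l mxE.
rewrite [LHS]cfun_sum_cfdot; apply: big1 => j _; by rewrite E M mxE scale0r.
Qed.
End Coord.

Section IntKernel.
Variables (gT : finGroupType) (G H : {group gT}).
Hypothesis sHG : H \subset G.

Lemma int_kernel n (psi : 'I_n -> 'CF(H)) (a : 'I_n -> algC) :
  (forall i, psi i \in 'Z[irr H]%g) ->
  \sum_i a i *: psi i != 0 -> 'Ind[G, H] (\sum_i a i *: psi i) = 0 ->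
  exists c : 'I_n -> int,
    \sum_i psi i *~ c i != 0 /\ 'Ind[G, H] (\sum_i psi i *~ c i) = 0.
Proof.
move=> Zpsi nz zI.
have ZI : forall i, 'Ind[G, H] (psi i) \in 'Z[irr G]%g by move=> i; apply: cfInd_vchar.
have IndS (w : 'rV[algC]_n) :
    'Ind[G, H] (\sum_i w 0 i *: psi i) = \sum_i w 0 i *: 'Ind[G, H] (psi i).
  by rewrite linear_sum; apply: eq_bigr => i _; rewrite linearZ.
pose a' : 'rV[algC]_n := \row_i a i.
have Ea : \sum_i a i *: psi i = \sum_i a' 0 i *: psi i.
  by apply: eq_bigr => i _; rewrite mxE.
have [b [bA bB]] : exists b : 'rV[rat]_n,
    b *m coordQ psi != 0 /\ b *m coordQ (fun i => 'Ind[G, H] (psi i)) = 0.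
  apply: (@rat_kernel _ _ _ _ _ a').
    by rewrite coordQE // -sum0P -Ea.
  by apply/eqP; rewrite coordQE // -sum0P -IndS -Ea zI.
have [d dnz [c Ec]] := clear_den b.
exists c.
have Ew : \sum_i psi i *~ c i = \sum_i (map_mx ratr (d *: b)) 0 i *: psi i.
  by apply: eq_bigr => i _; rewrite !mxE Ec ratr_int scaler_int.
rewrite Ew IndS; split.
  rewrite sum0P -coordQE // -map_mxM map_mx_eq0 -scalemxAl scalemx_eq0.
  by rewrite negb_or dnz.
apply/eqP; rewrite sum0P -coordQE // -map_mxM map_mx_eq0 -scalemxAl bB scaler0.
by [].
Qed.
End IntKernel.

Definition reR n (A : 'M[algC]_n) : 'M[algC]_(n + n) :=
  block_mx (map_mx (@Re _) A) (- map_mx (@Im _) A) (map_mx (@Im _) A) (map_mx (@Re _) A).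

Lemma map_Re_mul n (A B : 'M[algC]_n) :
  map_mx (@Re _) (A *m B) = map_mx (@Re _) A *m map_mx (@Re _) B - map_mx (@Im _) A *m map_mx (@Im _) B.
Proof.
apply/matrixP => i j; rewrite !mxE raddf_sum /= -sumrB; apply: eq_bigr => k _.
by rewrite !mxE ReM.
Qed.

Lemma map_Im_mul n (A B : 'M[algC]_n) :
  map_mx (@Im _) (A *m B) = map_mx (@Re _) A *m map_mx (@Im _) B + map_mx (@Im _) A *m map_mx (@Re _) B.
Proof.
apply/matrixP => i j; rewrite !mxE raddf_sum /= -big_split; apply: eq_bigr => k _.
by rewrite !mxE ImM [_ * 'Re _]mulrC.
Qed.

Lemma reR1 n : reR (1%:M : 'M[algC]_n) = 1%:M.
Proof.
have R1 : map_mx (@Re _) (1%:M : 'M[algC]_n) = 1%:M.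
  by apply/matrixP => i j; rewrite !mxE; case: (i == j); rewrite /= ?raddf0 // ReE conjC1; field.
have I1 : map_mx (@Im _) (1%:M : 'M[algC]_n) = 0.
  by apply/matrixP => i j; rewrite !mxE; case: (i == j); rewrite /= ?raddf0 // ImE conjC1 subrr mulr0 mul0r.
by rewrite /reR R1 I1 oppr0 scalar_mx_block.
Qed.

Lemma reRM n (A B : 'M[algC]_n) : reR (A *m B) = reR A *m reR B.
Proof.
rewrite /reR mulmx_block map_Re_mul map_Im_mul.
by congr block_mx; rewrite ?mulmxN ?mulNmx ?opprD // addrC.
Qed.

Lemma tr_Re n (A : 'M[algC]_n) : \tr (map_mx (@Re _) A) = 'Re (\tr A).
Proof. by rewrite /mxtrace raddf_sum; apply: eq_bigr => i _; rewrite mxE. Qed.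

Lemma reR_real n (A : 'M[algC]_n) i j : reR A i j \is Num.real.
Proof.
rewrite /reR -(splitK i) -(splitK j).
case: (split i) => i'; case: (split j) => j' /=;
  rewrite ?block_mxEul ?block_mxEur ?block_mxEdl ?block_mxEdr !mxE ?rpredN;
  by [apply: Creal_Re | apply: Creal_Im].
Qed.

Section RealRep.
Variables (gT : finGroupType) (K : {group gT}).

Lemma reR_repr n (rK : mx_representation algC K n) : mx_repr K (fun x => reR (rK x)).
Proof.
split; first by rewrite repr_mx1 reR1.
by move=> x y Kx Ky; rewrite /= repr_mxM // reRM.
Qed.

Lemma real_repr_char_reR n (rK : mx_representation algC K n) :
  real_repr_char (cfRepr rK + (cfRepr rK)^*%CF).
Proof.
exists (n + n), (MxRepresentation (reR_repr rK)); split.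
  by move=> x _ i j; apply: reR_real.
apply/cfunP => x; rewrite !cfunE /=.
case: (x \in K); last by rewrite !mulr0n rmorph0 addr0.
by rewrite !mulr1n /reR mxtrace_block tr_Re ReE; field.
Qed.

Lemma real_repr_char_inv (chi : 'CF(K)) x : real_repr_char chi -> chi x^-1%g = chi x.
Proof.
case=> n [rK [Hr ->]]; rewrite char_inv ?cfRepr_char // cfunE.
case: (boolP (x \in K)) => xK; last by rewrite mulr0n rmorph0.
rewrite mulr1n conj_Creal // /mxtrace; apply: rpred_sum => i _; exact: Hr.
Qed.

Lemma real_repr_char_add (chi1 chi2 : 'CF(K)) :
  real_repr_char chi1 -> real_repr_char chi2 -> real_repr_char (chi1 + chi2).
Proof.
case=> n1 [r1 [H1 ->]]; case=> n2 [r2 [H2 ->]].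
pose R1 := Representation r1; pose R2 := Representation r2.
exists (n1 + n2), (dadd_grepr R1 R2); split; last first.
  apply/cfunP => x; rewrite !cfunE /=; case: (x \in K); last by rewrite !mulr0n addr0.
  by rewrite !mulr1n mxtrace_block.
move=> x xK i j; rewrite /= -(splitK i) -(splitK j).
case: (split i) => i'; case: (split j) => j' /=;
  rewrite ?block_mxEul ?block_mxEur ?block_mxEdl ?block_mxEdr ?mxE //; by [apply: H1 | apply: H2].
Qed.

Lemma real_repr_char0 : real_repr_char (0 : 'CF(K)).
Proof.
exists 0%N, (@grepr0 algC gT K : mx_representation algC K 0); split; first by move=> x _ [].
by apply/cfunP => x; rewrite !cfunE mxtrace1 mul0rn.

Qed.

Lemma ROgrp0 : ROgrp (0 : 'CF(K)).
Proof. by exists 0, 0; split; rewrite ?subrr //; apply: real_repr_char0. Qed.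

Lemma ROgrpB phi psi : ROgrp phi -> ROgrp psi -> ROgrp (phi - psi :> 'CF(K)).
Proof.
case=> a1 [a2 [A1 A2 ->]]; case=> b1 [b2 [B1 B2 ->]].
exists (a1 + b2), (a2 + b1); split; try exact: real_repr_char_add.
ring.
Qed.

Lemma ROgrp_inv (phi : 'CF(K)) x : ROgrp phi -> phi x^-1%g = phi x.
Proof.
by case=> a1 [a2 [A1 A2 ->]]; rewrite !cfunE !real_repr_char_inv.
Qed.

Lemma ROgrpD phi psi : ROgrp phi -> ROgrp psi -> ROgrp (phi + psi :> 'CF(K)).
Proof.
move=> P Q; have -> : phi + psi = phi - (0 - psi) by rewrite sub0r opprK.
by apply: ROgrpB => //; apply: ROgrpB => //; apply: ROgrp0.
Qed.

Lemma ROgrpMz phi z : ROgrp phi -> ROgrp (phi *~ z :> 'CF(K)).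
Proof.
move=> P.
have Hn n : ROgrp (phi *+ n).
  elim: n => [|n IH]; first by rewrite mulr0n; apply: ROgrp0.
  by rewrite mulrS; apply: ROgrpD.
case: z => n; first exact: Hn.
rewrite NegzE mulrNz -sub0r; apply: ROgrpB; [exact: ROgrp0 | exact: Hn].
Qed.

Lemma ROgrp_sum I (r : seq I) (F : I -> 'CF(K)) :
  (forall i, ROgrp (F i)) -> ROgrp (\sum_(i <- r) F i).
Proof.
move=> P; elim: r => [|a r IH]; first by rewrite big_nil; apply: ROgrp0.
by rewrite big_cons; apply: ROgrpD.
Qed.
End RealRep.

Section Main.
Variables (gT : finGroupType) (G H : {group gT}).
Hypothesis sHG : H \subset G.

Lemma f_at_h h k : h \in H -> k \notin (h ^: H)%g -> forall b a : algC,
  (b *: '1_(h ^: H)%g - a *: '1_(k ^: H)%g : 'CF(H)) h = b.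
Proof.
move=> hH nk b a; rewrite !cfunE !cfun_classE hH class_refl class_sym (negPf nk).
by rewrite andbF mulr1 mulr0 subr0.
Qed.

Lemma sum_irr_cfdot (f : 'CF(H)) : \sum_i '[f, 'chi_i] *: 'chi_i = f.
Proof. by rewrite -cfun_sum_cfdot. Qed.

Lemma part1_dir h k : h \in H -> k \in H -> k \in (h ^: G)%g -> k \notin (h ^: H)%g ->
  exists phi : 'CF(H), [/\ phi \in 'Z[irr H]%g, phi != 0 & 'Ind[G, H] phi = 0].
Proof.
move=> hH kH khG nk; have [b bpos [a Hf]] := kernel_elt sHG hH kH khG.
set f := (b *: _ - _) in Hf.
have fh : f h = b by rewrite /f f_at_h.
have [c [nz zI]] := @int_kernel _ G H _ (fun i => 'chi_i) (fun i => '[f, 'chi_i])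
  (fun i => irr_vchar i)
  (ltac:(rewrite sum_irr_cfdot; apply/eqP => f0; move: fh; rewrite f0 cfunE => b0;
     by rewrite -b0 ltxx in bpos))
  (ltac:(by rewrite sum_irr_cfdot)).
 exists (\sum_i 'chi_i *~ c i); split => //.
by apply: rpred_sum => i _; apply: rpredMz; apply: irr_vchar.
Qed.

Lemma part2_dir h k : h \in H -> k \in H -> k \in (h ^: G)%g ->
  k \notin (h ^: H)%g -> k \notin (h^-1 ^: H)%g ->
  exists phi : 'CF(H), [/\ ROgrp phi, phi != 0 & 'Ind[G, H] phi = 0].
Proof.
move=> hH kH khG nk nk'; have [b bpos [a Hf]] := kernel_elt sHG hH kH khG.
set f := (b *: _ - _) in Hf.
have fh : f h = b by rewrite /f f_at_h.
have fhi : 0 <= f h^-1%g.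
  rewrite /f !cfunE !cfun_classE hH kH (class_sym H (h^-1)%g k) (negPf nk') /= mulr0 subr0.
  by apply: mulr_ge0; [apply: ltW | apply: ler0n].
pose f' := \sum_i '[f, 'chi_i] *: ('chi_i)^*%CF.
have f'E x : f' x = f x^-1%g.
  rewrite /f' sum_cfunE -[in RHS](sum_irr_cfdot f) sum_cfunE; apply: eq_bigr => i _.
  by rewrite !cfunE char_inv ?irr_char.
have If' : 'Ind[G, H] f' = 0.
  apply/cfunP => g; transitivity ('Ind[G, H] f (g^-1)%g); last by rewrite Hf !cfunE.
  by rewrite !cfIndE //; congr (_ * _); apply: eq_bigr => y _; rewrite f'E conjVg.
have Esum : \sum_i '[f, 'chi_i] *: ('chi_i + ('chi_i)^*%CF) = f + f'.
  by rewrite -{2}(sum_irr_cfdot f) /f' -big_split; apply: eq_bigr => i _; rewrite scalerDr.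
have Z2 : forall i, 'chi_i + ('chi_i)^*%CF \in 'Z[irr H]%g.
  by move=> i; rewrite -conjC_IirrE; apply: rpredD; apply: irr_vchar.
have N2 : \sum_i '[f, 'chi_i] *: ('chi_i + ('chi_i)^*%CF) != 0.
  rewrite Esum; apply/eqP => /(congr1 (fun p : 'CF(H) => p h)); rewrite [LHS]cfunE f'E fh [RHS]cfunE => E.
  by have := ltr_wpDr fhi bpos; rewrite E ltxx.
have I2 : 'Ind[G, H] (\sum_i '[f, 'chi_i] *: ('chi_i + ('chi_i)^*%CF)) = 0.
  by rewrite Esum linearD /= Hf If' addr0.
have [c [nz zI]] := @int_kernel _ G H _ _ _ Z2 N2 I2.
 exists (\sum_i ('chi_i + ('chi_i)^*%CF) *~ c i); split => //.
apply: ROgrp_sum => i; apply: ROgrpMz.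
exists ('chi_i + ('chi_i)^*%CF), 0; split; rewrite ?subr0 //; last exact: real_repr_char0.
by rewrite -irrRepr; apply: real_repr_char_reR.
Qed.

End Main.

Unset Implicit Arguments.

Theorem theoremA (gT : finGroupType) (G H : {group gT}) (sHG : H \subset G) :
  ((forall phi psi : 'CF(H), Rgrp phi -> Rgrp psi ->
      'Ind[G, H] phi = 'Ind[G, H] psi -> phi = psi)
   <-> (forall h, h \in H -> ((h ^: G) :&: H = h ^: H)%g))
  /\
  ((forall phi psi : 'CF(H), ROgrp phi -> ROgrp psi ->
      'Ind[G, H] phi = 'Ind[G, H] psi -> phi = psi)
   <-> (forall h, h \in H ->
          (((h ^: G) :|: (h^-1 ^: G)) :&: H = (h ^: H) :|: (h^-1 ^: H))%g)).
Proof.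
split; split.
- move=> Hinj h hH; apply/setP => k; rewrite inE; apply/andP/idP.
    case=> khG kH; case: (boolP (k \in (h ^: H)%g)) => // nk; exfalso.
    have [phi [Zphi nz zI]] := part1_dir sHG hH kH khG nk.
    have := Hinj phi 0 Zphi (rpred0 _); rewrite raddf0 => /(_ zI) E.
    by rewrite E eqxx in nz.
  move=> kh; split; first exact: (subsetP (classS h sHG)).
  exact: (subsetP (class_subG hH (subxx H))).
- move=> Hfus; apply: (@Ind_inj_of _ G H sHG (fun phi => Rgrp phi)).
  move=> phi _ h hH x xG hxH.
  have : (h ^ x)%g \in ((h ^: G) :&: H)%g by rewrite inE memJ_class.
  by rewrite Hfus // => /imsetP [y yH ->]; apply: cfunJ.
- move=> Hinj h hH; apply/setP => k; rewrite !inE.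
  have hiH : (h^-1)%g \in H by rewrite groupV.
  apply/andP/idP.
    case=> kG kH; apply/negPn/negP; rewrite negb_or => /andP [n1 n2].
    case/orP: kG => kG.
      have [phi [Rphi nz zI]] := part2_dir sHG hH kH kG n1 n2.
      have := Hinj phi 0 Rphi (ROgrp0 _); rewrite raddf0 => /(_ zI) E.
      by rewrite E eqxx in nz.
    have [phi [Rphi nz zI]] := part2_dir sHG hiH kH kG n2 (ltac:(by rewrite invgK)).
    have := Hinj phi 0 Rphi (ROgrp0 _); rewrite raddf0 => /(_ zI) E.
    by rewrite E eqxx in nz.
  case/orP => kh; split.
  - by apply/orP; left; apply: (subsetP (classS h sHG)).
  - exact: (subsetP (class_subG hH (subxx H))).
  - by apply/orP; right; apply: (subsetP (classS _ sHG)).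
  - exact: (subsetP (class_subG hiH (subxx H))).
- move=> Hfus; apply: (@Ind_inj_of _ G H sHG (fun phi => ROgrp phi)).
  move=> phi Rphi h hH x xG hxH.
  have : (h ^ x)%g \in (((h ^: G) :|: (h^-1 ^: G)) :&: H)%g.
    by rewrite inE hxH andbT inE memJ_class.
  rewrite Hfus // inE => /orP [] /imsetP [y yH ->]; first exact: cfunJ.
  by rewrite cfunJ // ROgrp_inv.
Qed.
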